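(* Let $N\ge0$ be an integer, let $\epsilon_1,\dots,\epsilon_N$ be i.i.d. Rademacher variables, and let $E=\sum_{i=1}^N\epsilon_i$ (so $E$ has the law of $2\,\mathrm{Binom}(N,\tfrac12)-N$). Then for every $b>1$, $$\mathbb E\big[\max\{E-\tfrac1bN,0\}\big]\le\frac{1-\frac1b}{e\cdot D\big(\frac{1+1/b}{2}\,\big\|\,\frac12\big)}.$$
   Context: $D(p\|q)=p\log\frac pq+(1-p)\log\frac{1-p}{1-q}$ is the binary Kullback–Leibler divergence. *)

(* Defs.v *)
From HB Require Import structures.
From mathcomp Require Import all_boot all_order all_algebra.
From mathcomp Require Import all_classical all_reals.
From mathcomp Require Import all_analysis.
Set Implicit Arguments. Unset Strict Implicit. Unset Printing Implicit Defensive.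
Import Order.TTheory GRing.Theory Num.Theory.
Local Open Scope ring_scope.

Definition binKL (R : realType) (p q : R) : R :=
  p * ln (p / q) + (1 - p) * ln ((1 - p) / (1 - q)).

Definition rad (R : realType) (s : bool) : R := if s then 1 else -1.

Definition radSum (R : realType) (N : nat) (s : {ffun 'I_N -> bool}) : R :=
  \sum_(i < N) rad R (s i).

(* Expectation w.r.t. the uniform probability on {+-1}^N, i.e. i.i.d. Rademacher. *)
Definition radExpect (R : realType) (N : nat) (f : {ffun 'I_N -> bool} -> R) : R :=
  (2 ^+ N)^-1 * \sum_(s : {ffun 'I_N -> bool}) f s.

(* Main.v *)
Require Import Defs.
From HB Require Import structures.
From mathcomp Require Import all_boot all_order all_algebra.
From mathcomp Require Import all_classical all_reals.
From mathcomp Require Import all_analysis.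
From mathcomp Require Import ring lra.
Import Order.TTheory GRing.Theory Num.Theory.
Local Open Scope ring_scope.

Section Aux.
Variable R : realType.

Lemma max_le_exp (x l : R) : 0 < l ->
  Num.max x 0 <= expR (l * x) / (expR 1 * l).
Proof.
move=> l0; have el : 0 < expR 1 * l by rewrite mulr_gt0 // expR_gt0.
rewrite ge_max; apply/andP; split; last first.
  by rewrite divr_ge0 // ?expR_ge0 // ltW.
rewrite ler_pdivlMr //.
have := expR_ge1Dx (l * x - 1); rewrite addrC subrK => h.
have -> : expR (l * x) = expR 1 * expR (l * x - 1).
  by rewrite -expRD addrC subrK.
by rewrite mulrC -mulrA ler_pM2l ?expR_gt0 // mulrC.
Qed.

Lemma sum_exp (N : nat) (l a : R) :
  \sum_(s : {ffun 'I_N -> bool}) expR (l * (@radSum R N s - a * N%:R))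
  = (expR (l * (1 - a)) + expR (l * (-1 - a))) ^+ N.
Proof.
have -> : (expR (l * (1 - a)) + expR (l * (-1 - a))) ^+ N
   = \prod_(i < N) \sum_(j : bool) expR (l * (Defs.rad R j - a)).
  rewrite prodr_const card_ord; congr (_ ^+ _).
  by rewrite big_bool /= addrC.
rewrite bigA_distr_bigA; apply: eq_bigr => s _.
rewrite -expR_sum -mulr_sumr; congr (expR (l * _)).
rewrite /radSum sumrB; congr (_ - _).
by rewrite sumr_const card_ord mulr_natr.
Qed.

End Aux.

Theorem lemma5 (R : realType) (N : nat) (b : R) (hb : 1 < b) :
  @radExpect R N (fun s => Num.max (@radSum R N s - b^-1 * N%:R) 0)
  <= (1 - b^-1) / (expR 1 * binKL ((1 + b^-1) / 2) (1 / 2)).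
Proof.
set a := b^-1.
have b0 : 0 < b by apply: lt_trans hb.
have a0 : 0 < a by rewrite invr_gt0.
have a1 : a < 1 by rewrite invf_lt1.
set p := (1 + a) / 2.
have p0 : 0 < p by rewrite /p; lra.
have ha2 : 1 + a = 2 * p by rewrite /p; field.
set h := (1 / 2 : R).
have h0 : 0 < h by rewrite /h; lra.
have hh : 1 - h = h by rewrite /h; field.
have lh : ln h = - ln 2 by rewrite /h mul1r lnV ?posrE.
clearbody h.
set D := binKL p h.
clearbody p.
set q := 1 - p.
have q0 : 0 < q by rewrite /q; lra.
have ha1 : 1 - a = 2 * q by rewrite /q; lra.
have qp : q <= p by rewrite /q; lra.
have hD : D = p * ln p + q * ln q - ln h.
  rewrite /D /binKL hh -/q !ln_div ?posrE //; rewrite /q; ring.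
have Dpos : 0 < D.
  have e1 := expR_ge1Dx (- ln (2 * p)).
  have e2 : 1 + (- ln (2 * q)) < expR (- ln (2 * q)).
    apply: expR_gt1Dx; rewrite oppr_eq0 ln_eq0; last by rewrite mulr_gt0.
    by apply/eqP => e; move: ha1; rewrite e; lra.
  rewrite expRN lnK ?posrE ?mulr_gt0 // in e1.
  rewrite expRN lnK ?posrE ?mulr_gt0 // in e2.
  rewrite !lnM ?posrE // in e1 e2.
  have i1 : p * (ln 2 + ln p) >= p * (1 - (2 * p)^-1).
    by rewrite ler_pM2l //; lra.
  have i2 : q * (ln 2 + ln q) > q * (1 - (2 * q)^-1).
    by rewrite ltr_pM2l //; lra.
  have j1 : p * (1 - (2 * p)^-1) = p - 1/2.
    by field; apply/eqP; move: p0; lra.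
  have j2 : q * (1 - (2 * q)^-1) = q - 1/2.
    by field; apply/eqP; move: q0; lra.
  rewrite hD lh; rewrite j1 in i1; rewrite j2 in i2; move: i1 i2; rewrite /q; lra.
set L := ln p - ln q.
have L0 : 0 <= L by rewrite /L subr_ge0 ler_ln ?posrE.
set t := D / (1 - a).
have t0 : 0 < t by rewrite divr_gt0 // subr_gt0.
set l := L / 2 + t.
have lt : t <= l by rewrite /l lerDr; lra.
have l0 : 0 < l by apply: lt_le_trans lt.
have key : expR (l * (1 - a)) + expR (l * (-1 - a)) <= 2.
  have E1 : l * (1 - a) = ln p - ln h.
    rewrite ha1 /l /t ha1 hD /L /q; field; apply/eqP; move: q0; rewrite /q; lra.
  have E2 : l * (-1 - a) <= ln q - ln h.
    have -> : -1 - a = - (1 + a) by ring.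
    rewrite ha2 /l.
    have -> : ln q - ln h = - p * L + D by rewrite hD /L /q; ring.
    have : 0 < p * t by rewrite mulr_gt0.
    move=> ?; nra.
  rewrite E1 expRB lnK ?posrE //.
  have := E2; rewrite -ler_expR expRB lnK ?posrE // => E2'.
  rewrite lnK ?posrE // in E2'.
  have eh : h^-1 = 2.
    have -> : h = 2^-1 by move: hh; lra.
    by rewrite invrK.
  move: E2'; rewrite lnK ?posrE // /q !eh; lra.
rewrite /radExpect.
have el : 0 < expR 1 * l by rewrite mulr_gt0 // expR_gt0.
have p2 : 0 < (2 : R) ^+ N by rewrite exprn_gt0.
apply: (@le_trans _ _ ((2 ^+ N)^-1 * (\sum_(s : {ffun 'I_N -> bool})
   expR (l * (@radSum R N s - a * N%:R)) / (expR 1 * l)))).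
  rewrite ler_pM2l ?invr_gt0 //; apply: ler_sum => s _.
  exact: max_le_exp.
rewrite -mulr_suml sum_exp.
set H := expR _ + expR _.
have H0 : 0 <= H by rewrite addr_ge0 ?expR_ge0.
have HN : H ^+ N <= 2 ^+ N by apply: lerXn2r; rewrite ?nnegrE.
rewrite mulrA; apply: (@le_trans _ _ (1 / (expR 1 * l))).
  rewrite ler_pM2r ?invr_gt0 // mulrC ler_pdivrMr // mul1r //.
have -> : (1 - a) / (expR 1 * D) = 1 / (expR 1 * t).
  rewrite /t; field; apply/and3P; split.
  - by rewrite subr_eq0 gt_eqF.
  - by rewrite gt_eqF.
  - by rewrite gt_eqF // expR_gt0.
rewrite !mul1r lef_pV2 ?posrE ?mulr_gt0 ?expR_gt0 //.
  by rewrite ler_pM2l ?expR_gt0.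
by rewrite invr_gt0 subr_gt0.
Qed.
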